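(* Let $X$ be a Tychonoff space. Then $C_k(X)$ is $\aleph_0$-bounded if and only if every compact subset of $X$ is metrizable.
   Context: $C(X)$ is the set of continuous real-valued functions on $X$, a topological group under pointwise addition. $C_k(X)$ is $C(X)$ with the compact-open topology, whose basic neighborhoods of $f$ are $\{g:|g(x)-f(x)|<\varepsilon\ \forall x\in K\}$, $K\subset X$ compact, $\varepsilon>0$. A topological group $G$ with identity $e$ is $\aleph_0$-bounded if for each neighborhood $U$ of $e$ there is a countable $A\subset G$ with $G=A\cdot U$. *)

(* Defs.v *)
From Stdlib Require Import Reals List.
Open Scope R_scope.

Record TopSpace := {
  carrier :> Type;
  is_open : (carrier -> Prop) -> Prop;
  open_full : is_open (fun _ => True);
  open_inter : forall U V, is_open U -> is_open V ->
                 is_open (fun x => U x /\ V x);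
  open_union : forall S : (carrier -> Prop) -> Prop,
                 (forall U, S U -> is_open U) ->
                 is_open (fun x => exists U, S U /\ U x)
}.

Definition is_closed (X : TopSpace) (F : X -> Prop) : Prop :=
  is_open X (fun x => ~ F x).

Definition R_open (V : R -> Prop) : Prop :=
  forall y, V y -> exists r, 0 < r /\ forall z, Rabs (z - y) < r -> V z.

Definition cont_real (X : TopSpace) (f : X -> R) : Prop :=
  forall V, R_open V -> is_open X (fun x => V (f x)).

Definition compact_set (X : TopSpace) (K : X -> Prop) : Prop :=
  forall S : (X -> Prop) -> Prop,
    (forall U, S U -> is_open X U) ->
    (forall x, K x -> exists U, S U /\ U x) ->
    exists l : list (X -> Prop),
      (forall U, In U l -> S U) /\
      (forall x, K x -> exists U, In U l /\ U x).

Definition tychonoff (X : TopSpace) : Prop :=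
  (forall x : X, is_closed X (fun y => y = x)) /\
  (forall (F : X -> Prop) (x : X), is_closed X F -> ~ F x ->
     exists f : X -> R, cont_real X f /\
       (forall y, 0 <= f y <= 1) /\ f x = 0 /\ (forall y, F y -> f y = 1)).

(* The subspace K of X is metrizable: there is a metric d on K whose
   metric topology coincides with the subspace topology on K. *)
Definition metrizable_subspace (X : TopSpace) (K : X -> Prop) : Prop :=
  exists d : X -> X -> R,
    (forall x y, K x -> K y -> 0 <= d x y) /\
    (forall x y, K x -> K y -> (d x y = 0 <-> x = y)) /\
    (forall x y, K x -> K y -> d x y = d y x) /\
    (forall x y z, K x -> K y -> K z -> d x z <= d x y + d y z) /\
    (forall A : X -> Prop, (forall x, A x -> K x) ->
       ((exists U, is_open X U /\ forall x, K x -> (A x <-> U x)) <->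
        (forall x, A x -> exists r, 0 < r /\
           forall y, K y -> d x y < r -> A y))).

Definition ck_open (X : TopSpace) (W : (X -> R) -> Prop) : Prop :=
  forall f, cont_real X f -> W f ->
    exists (K : X -> Prop) (eps : R), compact_set X K /\ 0 < eps /\
      forall g, cont_real X g ->
        (forall x, K x -> Rabs (g x - f x) < eps) -> W g.

Definition ck_nbhd0 (X : TopSpace) (U : (X -> R) -> Prop) : Prop :=
  exists W, ck_open X W /\ W (fun _ => 0) /\
    (forall g, cont_real X g -> W g -> U g).

Definition countable_set {A : Type} (S : A -> Prop) : Prop :=
  exists s : nat -> A, forall a, S a -> exists n, s n = a.

Definition aleph0_bounded_Ck (X : TopSpace) : Prop :=
  forall U : (X -> R) -> Prop, ck_nbhd0 X U ->
    exists A : (X -> R) -> Prop,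
      countable_set A /\ (forall a, A a -> cont_real X a) /\
      forall f, cont_real X f ->
        exists a u, A a /\ U u /\ cont_real X u /\
          f = (fun x => a x + u x).

(* Main.v *)
From Coquelicot Require Import Coquelicot.
Require Import Defs.
From Stdlib Require Import Reals List Lra Lia Cantor.
From Stdlib Require Import FunctionalExtensionality PropExtensionality ClassicalEpsilon Classical.
Open Scope R_scope.

Lemma open_local (X:TopSpace) (P : X -> Prop):
 (forall x, P x -> exists W, is_open X W /\ W x /\ forall z, W z -> P z) -> is_open X P.
Proof.
 intros H.
 assert (E: P = (fun x => exists W, (is_open X W /\ forall z, W z -> P z) /\ W x)).
 { apply functional_extensionality; intro x; apply propositional_extensionality; split.
   - intro Px. destruct (H x Px) as [W [HW [Wx HWP]]]. exists W; auto.
   - intros [W [[_ HWP] Wx]]. auto. }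
 rewrite E. apply open_union. intros U [HU _]. exact HU.
Qed.

Lemma open_pre_ball (X:TopSpace) (f : X -> R) (Hf: cont_real X f) c r :
  is_open X (fun z => Rabs (f z - c) < r).
Proof.
 apply (Hf (fun y => Rabs (y - c) < r)). intros y Hy. exists (r - Rabs (y-c)); split; [lra|].
 intros z Hz. replace (z-c) with ((z-y)+(y-c)) by ring.
 eapply Rle_lt_trans; [apply Rabs_triang|lra].
Qed.

Lemma cont_const (X:TopSpace) c : cont_real X (fun _ => c).
Proof.
 intros V HV. apply open_local. intros x Vc. exists (fun _ => True). split; [apply open_full|].
 split; auto.
Qed.

Lemma cont_local (X:TopSpace) (f : X -> R) :
 (forall x r, 0 < r -> exists W, is_open X W /\ W x /\ forall z, W z -> Rabs (f z - f x) < r) ->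
 cont_real X f.
Proof.
 intros H V HV. apply open_local. intros x Vx. destruct (HV _ Vx) as [r [r0 Hr]].
 destruct (H x r r0) as [W [HW [Wx HWr]]]. exists W; repeat split; auto.
Qed.

Lemma abs_sub_le a b : Rabs (a - b) <= Rabs a + Rabs b.
Proof. pose proof (Rabs_triang a (-b)). rewrite Rabs_Ropp in H. exact H. Qed.

Lemma cont_sub (X:TopSpace) (f g : X -> R) : cont_real X f -> cont_real X g ->
  cont_real X (fun x => f x - g x).
Proof.
 intros Hf Hg. apply cont_local. intros x r r0.
 exists (fun z => Rabs (f z - f x) < r/2 /\ Rabs (g z - g x) < r/2).
 split; [apply open_inter; apply open_pre_ball; auto|].
 split. { rewrite !Rminus_diag, Rabs_R0; lra. }
 intros z [H1 H2]. replace (f z - g z - (f x - g x)) with ((f z - f x) - (g z - g x)) by ring.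
 eapply Rle_lt_trans; [apply abs_sub_le|lra].
Qed.

Lemma half_pow_pos j : 0 < (/2)^j.
Proof. apply pow_lt; lra. Qed.
Lemma half_pow_le1 j : (/2)^j <= 1.
Proof. induction j; simpl; [lra|]. pose proof (half_pow_pos j). nra. Qed.
Lemma half_pow_add n k : (/2)^(n+k) <= (/2)^k.
Proof. rewrite pow_add. pose proof (half_pow_le1 n). pose proof (half_pow_pos k). nra. Qed.

Lemma is_geom : is_series (fun j => (/2)^j) 2.
Proof.
 assert (H: Rabs (/2) < 1) by (rewrite Rabs_pos_eq; lra).
 pose proof (is_series_geom (/2) H) as G. replace (/(1 - /2)) with 2 in G by field. exact G.
Qed.
Lemma ex_geomC C : ex_series (fun j => C * (/2)^j).
Proof. exact (ex_series_scal_l C _ (ex_intro _ _ is_geom)). Qed.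
Lemma Series_geomC C : Series (fun j => C * (/2)^j) = C * 2.
Proof. rewrite Series_scal_l. f_equal. apply is_series_unique. exact is_geom. Qed.

Lemma ex_small (a : nat -> R) C : (forall j, 0 <= a j <= C * (/2)^j) -> ex_series a.
Proof.
 intros H. apply (ex_series_le a (fun j => C * (/2)^j)); [|apply ex_geomC].
 intros n. change (norm (a n)) with (Rabs (a n)). rewrite Rabs_pos_eq; apply H.
Qed.

Lemma Series_zero : Series (fun _ => 0) = 0.
Proof.
 transitivity (Series (fun n : nat => 0 * 0)). { apply Series_ext; intros; ring. }
 rewrite Series_scal_l. ring.
Qed.

Lemma Series_nonneg (a : nat -> R) C : (forall j, 0 <= a j <= C * (/2)^j) -> 0 <= Series a.
Proof.
 intros H. rewrite <- Series_zero. apply Series_le; [|eapply ex_small; eauto].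
 intros n; split; [lra|apply H].
Qed.

Lemma term_le (a : nat -> R) C : (forall j, 0 <= a j <= C * (/2)^j) -> forall j, a j <= Series a.
Proof.
 intros H j. rewrite (Series_incr_n a (S j)); [|lia|eapply ex_small; eauto].
 simpl Nat.pred.
 assert (0 <= Series (fun k => a (S j + k)%nat)).
 { apply (Series_nonneg _ C). intros k; split; [apply H|].
   destruct (H (S j + k)%nat) as [H1 H2]. pose proof (half_pow_add (S j) k).
   assert (0 <= C). { pose proof (half_pow_pos (S j + k)%nat). nra. }
   nra. }
 destruct j. { change (sum_f_R0 a 0) with (a 0%nat). lra. }
 rewrite tech5. pose proof (cond_pos_sum a j (fun n => proj1 (H n))). lra.
Qed.

Lemma sum_bound (a : nat -> R) rho n : (forall j, (j <= n)%nat -> a j <= rho) -> sum_f_R0 a n <= INR (S n) * rho.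
Proof.
 induction n; intros H.
 - simpl. specialize (H 0%nat (le_n _)). lra.
 - rewrite tech5. rewrite S_INR. specialize (IHn (fun j Hj => H j (le_S _ _ Hj))).
   specialize (H (S n) (le_n _)). lra.
Qed.

Definition tt {X : Type} (h : nat -> X -> R) x y j := (/2)^j * Rmin 1 (Rabs (h j x - h j y)).
Definition dd {X : Type} (h : nat -> X -> R) x y := Series (tt h x y).

Lemma Rmin1_bounds v : 0 <= v -> 0 <= Rmin 1 v <= 1 /\ Rmin 1 v <= v.
Proof. intros. unfold Rmin; destruct (Rle_dec 1 v); lra. Qed.

Lemma tt_bounds {X : Type} (h : nat -> X -> R) x y j : 0 <= tt h x y j <= 1 * (/2)^j.
Proof.
 unfold tt. pose proof (half_pow_pos j). destruct (Rmin1_bounds (Rabs (h j x - h j y)) (Rabs_pos _)).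
 nra.
Qed.

Lemma tt_le_dd {X : Type} (h : nat -> X -> R) x y j : tt h x y j <= dd h x y.
Proof. apply (term_le _ 1). intros; apply tt_bounds. Qed.

Lemma dd_nonneg {X : Type} (h : nat -> X -> R) x y : 0 <= dd h x y.
Proof. apply (Series_nonneg _ 1). intros; apply tt_bounds. Qed.

Lemma dd_refl {X : Type} (h : nat -> X -> R) x : dd h x x = 0.
Proof.
 unfold dd. rewrite <- Series_zero. apply Series_ext. intros n. unfold tt.
 rewrite Rminus_diag, Rabs_R0. unfold Rmin. destruct (Rle_dec 1 0); [lra|]. ring.
Qed.

Lemma dd_sym {X : Type} (h : nat -> X -> R) x y : dd h x y = dd h y x.
Proof. unfold dd. apply Series_ext. intros n. unfold tt. rewrite Rabs_minus_sym. reflexivity. Qed.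

Lemma Rmin_tri a b c : Rmin 1 (Rabs (a - c)) <= Rmin 1 (Rabs (a - b)) + Rmin 1 (Rabs (b - c)).
Proof.
 pose proof (Rabs_pos (a-b)). pose proof (Rabs_pos (b-c)).
 assert (Rabs (a - c) <= Rabs (a-b) + Rabs (b-c)).
 { replace (a-c) with ((a-b)+(b-c)) by ring. apply Rabs_triang. }
 unfold Rmin. repeat destruct Rle_dec; lra.
Qed.

Lemma dd_tri {X : Type} (h : nat -> X -> R) x y z : dd h x z <= dd h x y + dd h y z.
Proof.
 unfold dd. rewrite <- Series_plus; try (apply (ex_small _ 1); intros; apply tt_bounds).
 apply Series_le.
 - intros n. split; [apply tt_bounds|]. unfold tt. rewrite <- Rmult_plus_distr_l.
   apply Rmult_le_compat_l; [left; apply half_pow_pos|]. apply Rmin_tri.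
 - apply (ex_small _ 2). intros j. pose proof (tt_bounds h x y j). pose proof (tt_bounds h y z j). lra.
Qed.

Lemma cont_d (X : TopSpace) (h : nat -> X -> R) (hc : forall j, cont_real X (h j)) x r :
  0 < r -> exists V, is_open X V /\ V x /\ forall z, V z -> dd h x z < r.
Proof.
 intros r0.
 assert (Hlt : Rabs (/2) < 1) by (rewrite Rabs_pos_eq; lra).
 destruct (pow_lt_1_zero (/2) Hlt (r/4)) as [N HN]; [lra|].
 set (M := S N). specialize (HN M (le_S _ _ (le_n N))).
 rewrite Rabs_pos_eq in HN by (left; apply half_pow_pos).
 assert (HM : 0 < INR M) by (apply lt_0_INR; unfold M; lia).
 set (rho := r / (2 * INR M)).
 assert (rho0 : 0 < rho) by (unfold rho; apply Rdiv_lt_0_compat; lra).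
 assert (FI : forall n, exists V, is_open X V /\ V x /\
            forall z, V z -> forall j, (j < n)%nat -> Rabs (h j z - h j x) < rho).
 { induction n.
   - exists (fun _ => True). split; [apply open_full|]. split; auto. intros; lia.
   - destruct IHn as [V [HV [Vx HVz]]].
     exists (fun z => V z /\ Rabs (h n z - h n x) < rho). split.
     + apply open_inter; auto. apply open_pre_ball; auto.
     + split. { split; auto. rewrite Rminus_diag, Rabs_R0; lra. }
       intros z [Vz Hz] j Hj. destruct (Nat.eq_dec j n) as [->|]; auto. apply HVz; auto; lia. }
 destruct (FI M) as [V [HV [Vx HVz]]]. exists V. split; auto. split; auto.
 intros z Vz. unfold dd.
 rewrite (Series_incr_n _ M); [|unfold M; lia|apply (ex_small _ 1); intros; apply tt_bounds].
 replace (Nat.pred M) with N by (unfold M; lia).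
 assert (S1 : sum_f_R0 (tt h x z) N <= INR M * rho).
 { apply sum_bound. intros j Hj. unfold tt.
   pose proof (HVz z Vz j ltac:(unfold M; lia)). rewrite Rabs_minus_sym in H.
   destruct (Rmin1_bounds (Rabs (h j x - h j z)) (Rabs_pos _)).
   pose proof (half_pow_le1 j). pose proof (half_pow_pos j). nra. }
 assert (S2 : Series (fun k => tt h x z (M + k)) <= (/2)^M * 2).
 { rewrite <- Series_geomC. apply Series_le; [|apply ex_geomC].
   intros k. split; [apply tt_bounds|]. rewrite <- pow_add. pose proof (tt_bounds h x z (M+k)). lra. }
 assert (INR M * rho = r / 2) by (unfold rho; field; lra).
 lra.
Qed.

Lemma sep_d (X : TopSpace) (h : nat -> X -> R) (hc : forall j, cont_real X (h j)) x z j :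
  h j x <> h j z -> exists V d0, is_open X V /\ V z /\ 0 < d0 /\ forall w, V w -> d0 <= dd h x w.
Proof.
 intros Hne. set (tau := Rabs (h j x - h j z)).
 assert (t0 : 0 < tau) by (apply Rabs_pos_lt; intro E; apply Hne; lra).
 exists (fun w => Rabs (h j w - h j z) < tau / 2), ((/2)^j * Rmin 1 (tau/2)).
 split; [apply open_pre_ball; auto|]. split. { rewrite Rminus_diag, Rabs_R0; lra. }
 split. { apply Rmult_lt_0_compat; [apply half_pow_pos|]. apply Rmin_pos; lra. }
 intros w Hw. eapply Rle_trans; [|apply (tt_le_dd h x w j)]. unfold tt.
 apply Rmult_le_compat_l; [left; apply half_pow_pos|].
 assert (tau / 2 <= Rabs (h j x - h j w)).
 { unfold tau in *. replace (h j x - h j z) with ((h j x - h j w) + (h j w - h j z)) in * by ring.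
   pose proof (Rabs_triang (h j x - h j w) (h j w - h j z)). lra. }
 unfold Rmin. repeat destruct Rle_dec; lra.
Qed.

Lemma metric_from_family (X : TopSpace) (K : X -> Prop) (HKc : compact_set X K)
  (h : nat -> X -> R) (hc : forall j, cont_real X (h j))
  (hsep : forall x y, K x -> K y -> x <> y -> exists j, h j x <> h j y) :
  metrizable_subspace X K.
Proof.
 exists (dd h). split; [intros; apply dd_nonneg|]. split.
 { intros x y Kx Ky. split; [|intros ->; apply dd_refl].
   intros H0. apply NNPP. intro Hne. destruct (hsep x y Kx Ky Hne) as [j Hj].
   pose proof (tt_le_dd h x y j). unfold tt in H.
   assert (0 < (/2)^j * Rmin 1 (Rabs (h j x - h j y))).
   { apply Rmult_lt_0_compat; [apply half_pow_pos|]. apply Rmin_pos; [lra|].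
     apply Rabs_pos_lt. intro E; apply Hj; lra. }
   lra. }
 split; [intros; apply dd_sym|]. split; [intros; apply dd_tri|].
 intros A HA. split.
 - intros [U [HU HUA]] x Ax. pose proof (HA x Ax) as Kx.
   set (S := fun V => is_open X V /\ ((forall z, V z -> K z -> A z) \/
              exists d0, 0 < d0 /\ forall z, V z -> d0 <= dd h x z)).
   destruct (HKc S) as [l [Hl Hcov]].
   + intros V [HV _]; exact HV.
   + intros z Kz. destruct (classic (U z)) as [Uz|nUz].
     * exists U. split; auto. split; auto. left. intros w Uw Kw. apply (HUA w Kw); auto.
     * assert (x <> z). { intros ->. apply nUz. apply (HUA z Kz); auto. }
       destruct (hsep x z Kx Kz H) as [j Hj].
       destruct (sep_d X h hc x z j Hj) as [V [d0 [HV [Vz [d00 Hd]]]]].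
       exists V. split; auto. split; auto. right. exists d0; auto.
   + assert (LL : forall l', (forall V, In V l' -> S V) -> exists r, 0 < r /\
               forall V, In V l' -> forall z, V z -> K z -> dd h x z < r -> A z).
     { induction l' as [|V l' IH]; intros Hl'.
       - exists 1. split; [lra|]. intros V [].
       - destruct IH as [r [r0 Hr]]. { intros; apply Hl'; simpl; auto. }
         assert (HSV := Hl' V (or_introl eq_refl)). unfold S in HSV.
         destruct HSV as [_ [HP|[d0 [d00 Hd]]]].
         + exists r. split; auto. intros V' [<-|HV'] z Vz Kz Hdz; auto. eapply Hr; eauto.
         + exists (Rmin r d0). split; [apply Rmin_pos; auto|].
           intros V' [<-|HV'] z Vz Kz Hdz.
           * pose proof (Hd z Vz). pose proof (Rmin_r r d0). lra.
           * eapply Hr; eauto. pose proof (Rmin_l r d0). lra. }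
     destruct (LL l Hl) as [r [r0 Hr]]. exists r. split; auto.
     intros y Ky Hy. destruct (Hcov y Ky) as [V [HVl Vy]]. eapply Hr; eauto.
 - intros Hd.
   exists (fun z => exists V, (is_open X V /\ forall w, V w -> K w -> A w) /\ V z).
   split. { apply open_union. intros V [HV _]; exact HV. }
   intros x Kx. split.
   + intros Ax. destruct (Hd x Ax) as [r [r0 Hr]].
     destruct (cont_d X h hc x r r0) as [V [HV [Vx HVd]]].
     exists V. split; [split; [exact HV|] | exact Vx]. intros w Vw Kw. apply Hr; auto.
   + intros [V [[_ HV] Vx]]. auto.
Qed.

Lemma forward (X : TopSpace) (HX : tychonoff X) :
  aleph0_bounded_Ck X -> forall K, compact_set X K -> metrizable_subspace X K.
Proof.
 intros Hb K HKc.
 assert (Hm : forall m : nat, exists s : nat -> X -> R, forall f, cont_real X f ->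
           exists k, cont_real X (s k) /\ forall x, K x -> Rabs (f x - s k x) < / (INR m + 1)).
 { intros m. set (c := / (INR m + 1)).
   assert (c0 : 0 < c) by (unfold c; apply Rinv_0_lt_compat; pose proof (pos_INR m); lra).
   destruct (Hb (fun g => forall x, K x -> Rabs (g x) < c)) as [A [[s Hs] [HAc Hdec]]].
   - exists (fun g => exists e, 0 < e /\ forall x, K x -> Rabs (g x) < c - e).
     split; [|split].
     + intros f _ [e [e0 He]]. exists K, (e/2). split; [exact HKc|]. split; [lra|].
       intros g _ Hg. exists (e/2). split; [lra|]. intros x Kx.
       specialize (Hg x Kx). specialize (He x Kx).
       replace (g x) with ((g x - f x) + f x) by ring.
       pose proof (Rabs_triang (g x - f x) (f x)). lra.
     + exists (c/2). split; [lra|]. intros x _. rewrite Rabs_R0. lra.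
     + intros g _ [e [e0 He]] x Kx. specialize (He x Kx). lra.
   - exists s. intros f Hf. destruct (Hdec f Hf) as [a [u [Aa [Uu [Hu ->]]]]].
     destruct (Hs a Aa) as [k <-]. exists k. split; [apply HAc; exact Aa|].
     intros x Kx. replace (s k x + u x - s k x) with (u x) by ring. apply Uu; auto. }
 set (S := fun m => proj1_sig (constructive_indefinite_description _ (Hm m))).
 assert (SS : forall m f, cont_real X f -> exists k, cont_real X (S m k) /\
            forall x, K x -> Rabs (f x - S m k x) < / (INR m + 1)).
 { intros m. exact (proj2_sig (constructive_indefinite_description _ (Hm m))). }
 set (h := fun j => let (m, k) := of_nat j in S m k).
 set (h' := fun j => if excluded_middle_informative (cont_real X (h j)) then h j else (fun _ : X => 0)).
 apply (metric_from_family X K HKc h').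
 - intros j. unfold h'. destruct excluded_middle_informative; auto. apply cont_const.
 - intros x y Kx Ky Hne. destruct HX as [HT1 Hcr].
   destruct (Hcr (fun z => z = x) y (HT1 x) (fun e => Hne (eq_sym e))) as [f [Hf [Hf01 [Hfy Hfx]]]].
   specialize (Hfx x eq_refl).
   destruct (SS 2%nat f Hf) as [k [Hk Hkb]].
   exists (to_nat (2%nat, k)).
   assert (E : h' (to_nat (2%nat, k)) = S 2%nat k).
   { unfold h'. assert (Eh : h (to_nat (2%nat, k)) = S 2%nat k) by (unfold h; rewrite cancel_of_to; reflexivity).
     rewrite Eh. destruct excluded_middle_informative; [reflexivity|contradiction]. }
   rewrite E. intro Ee.
   pose proof (Hkb x Kx). pose proof (Hkb y Ky).
   replace (INR 2 + 1) with 3 in * by (simpl; ring).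
   rewrite Hfx in H. rewrite Hfy in H0. rewrite Ee in H.
   apply Rabs_def2 in H. apply Rabs_def2 in H0. lra.
Qed.

Definition gT (m : nat) : nat * nat * Z :=
  let (a, b) := of_nat m in let (c, e) := of_nat b in let (p, q) := of_nat e in
  (a, c, (Z.of_nat p - Z.of_nat q)%Z).

Lemma gT_surj t : exists m, gT m = t.
Proof.
 destruct t as [[a c] z].
 exists (to_nat (a, to_nat (c, to_nat (Z.to_nat z, Z.to_nat (- z))))).
 unfold gT. rewrite !cancel_of_to. f_equal. lia.
Qed.

Fixpoint decL (kk m : nat) : list (nat * nat * Z) :=
  match kk with
  | O => nil
  | S kk' => let (a, b) := of_nat m in gT a :: decL kk' b
  end.

Lemma decL_surj l : exists kk m, decL kk m = l.
Proof.
 induction l as [|t l IH].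
 - exists O, O. reflexivity.
 - destruct IH as [kk [m E]]. destruct (gT_surj t) as [a Ea].
   exists (S kk), (to_nat (a, m)).
   change (decL (S kk) (to_nat (a,m))) with (let (a0,b) := of_nat (to_nat (a,m)) in gT a0 :: decL kk b).
   rewrite cancel_of_to. rewrite Ea, E. reflexivity.
Qed.

Lemma int_approx r hh : 0 < hh -> exists z : Z, Rabs (IZR z * hh - r) < hh.
Proof.
 intros H. destruct (archimed (r / hh)) as [H1 H2].
 exists (up (r / hh) - 1)%Z. rewrite minus_IZR.
 assert (E : (IZR (up (r/hh)) - 1) * hh - r = hh * ((IZR (up (r/hh)) - 1) - r / hh)) by (field; lra).
 rewrite E, Rabs_mult, Rabs_pos_eq by lra.
 assert (Rabs (IZR (up (r / hh)) - 1 - r / hh) < 1) by (apply Rabs_def1; lra).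
 nra.
Qed.

Lemma backward (X : TopSpace) :
  (forall K, compact_set X K -> metrizable_subspace X K) -> aleph0_bounded_Ck X.
Proof.
 intros HK U [W [HWo [HW0 HWU]]].
 destruct (HWo (fun _ => 0) (cont_const X 0) HW0) as [K [eps [HKc [Heps HKW]]]].
 destruct (HK K HKc) as [d [d0 [dsep [dsym [dtri dtop]]]]].
 assert (ball_open : forall c rho, K c -> exists O, is_open X O /\
            forall y, K y -> (O y <-> d c y < rho)).
 { intros c rho Kc.
   destruct (proj2 (dtop (fun y => K y /\ d c y < rho) (fun y H => proj1 H))) as [O [HO HOA]].
   - intros x [Kx Hx]. exists (rho - d c x). split; [lra|]. intros y Ky Hy. split; auto.
     pose proof (dtri c x y Kc Kx Ky). lra.
   - exists O. split; auto. intros y Ky. rewrite <- (HOA y Ky). tauto. }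
 assert (rel_open : forall O, is_open X O -> forall x, K x -> O x ->
            exists r, 0 < r /\ forall y, K y -> d x y < r -> O y).
 { intros O HO x Kx Ox.
   assert (E : forall y, K y -> (K y /\ O y <-> O y)) by tauto.
   destruct (proj1 (dtop (fun y => K y /\ O y) (fun y H => proj1 H))
               (ex_intro _ O (conj HO E)) x (conj Kx Ox)) as [r [r0 Hr]].
   exists r. split; auto. intros y Ky Hy. apply (Hr y Ky Hy). }
 assert (Hnet : forall n : nat, exists L : list X, (forall c, In c L -> K c) /\
            forall y, K y -> exists c, In c L /\ d c y < / (INR n + 1)).
 { intros n. set (rho := / (INR n + 1)).
   assert (rho0 : 0 < rho) by (unfold rho; apply Rinv_0_lt_compat; pose proof (pos_INR n); lra).
   set (Cov := fun O => is_open X O /\ exists c, K c /\ forall y, K y -> (O y <-> d c y < rho)).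
   destruct (HKc Cov) as [l [Hl Hcov]].
   - intros O [HO _]; exact HO.
   - intros x Kx. destruct (ball_open x rho Kx) as [O [HO HOb]]. exists O. split.
     + split; auto. exists x; auto.
     + apply HOb; auto. rewrite (proj2 (dsep x x Kx Kx) eq_refl). exact rho0.
   - assert (LL : forall l', (forall O, In O l' -> Cov O) -> exists L, (forall c, In c L -> K c) /\
               forall y, K y -> (exists O, In O l' /\ O y) -> exists c, In c L /\ d c y < rho).
     { induction l' as [|O l' IH]; intros Hl'.
       - exists nil. split; [intros c []|]. intros y _ [O [[] _]].
       - destruct IH as [L [HL1 HL2]]. { intros; apply Hl'; simpl; auto. }
         assert (HSO := Hl' O (or_introl eq_refl)). unfold Cov in HSO.
         destruct HSO as [_ [c [Kc Hc]]].
         exists (c :: L). split. { intros c' [<-|H]; auto. }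
         intros y Ky [O' [[<-|HO'] Oy]].
         + exists c. split; [left; auto|]. apply Hc; auto.
         + destruct (HL2 y Ky (ex_intro _ O' (conj HO' Oy))) as [c' [Hc' Hd]].
           exists c'. split; [right; auto|auto]. }
     destruct (LL l Hl) as [L [HL1 HL2]]. exists L. split; [exact HL1|]. intros y Ky. apply HL2; auto. }
 set (net := fun n => proj1_sig (constructive_indefinite_description _ (Hnet n))).
 assert (Hnet' : forall n, (forall c, In c (net n) -> K c) /\
            forall y, K y -> exists c, In c (net n) /\ d c y < / (INR n + 1)).
 { intros n. exact (proj2_sig (constructive_indefinite_description _ (Hnet n))). }
 set (hh := eps / 8).
 set (Qp := fun (lst : list (nat*nat*Z)) (g : X -> R) => forall n k z, In (n,k,z) lst ->
          forall c, nth_error (net n) k = Some c -> forall y, K y -> d c y < / (INR n + 1) ->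
          Rabs (g y - IZR z * hh) < eps / 2).
 set (chs := fun lst => epsilon (inhabits (fun _ : X => 0)) (fun a => cont_real X a /\ Qp lst a)).
 exists (fun a => exists lst, a = chs lst /\ cont_real X a).
 split; [|split].
 - exists (fun N => let (kk, m) := of_nat N in chs (decL kk m)).
   intros a [lst [-> _]]. destruct (decL_surj lst) as [kk [m E]].
   exists (to_nat (kk, m)). rewrite cancel_of_to, E. reflexivity.
 - intros a [_ [_ Ha]]; exact Ha.
 - intros f Hf.
   set (Cov := fun O => is_open X O /\ exists n k c, nth_error (net n) k = Some c /\
          (forall y, K y -> (O y <-> d c y < / (INR n + 1))) /\
          (forall y, K y -> d c y < / (INR n + 1) -> Rabs (f y - f c) < eps / 4)).
   destruct (HKc Cov) as [l [Hl Hcov]].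
   + intros O [HO _]; exact HO.
   + intros x Kx.
     destruct (rel_open _ (open_pre_ball X f Hf (f x) (eps/8)) x Kx) as [r [r0 Hr]].
     { rewrite Rminus_diag, Rabs_R0; lra. }
     destruct (archimed_cor1 (r/2)) as [n [Hn Hn0]]; [lra|].
     set (rho := / (INR n + 1)).
     assert (Hrho : rho < r / 2).
     { unfold rho. apply lt_0_INR in Hn0. eapply Rlt_trans; [|exact Hn].
       apply Rinv_lt_contravar; [nra|lra]. }
     assert (rho0 : 0 < rho) by (unfold rho; apply Rinv_0_lt_compat; pose proof (pos_INR n); lra).
     destruct (proj2 (Hnet' n) x Kx) as [c [Hc Hcx]].
     pose proof (proj1 (Hnet' n) c Hc) as Kc.
     destruct (In_nth_error _ _ Hc) as [k Hk].
     destruct (ball_open c rho Kc) as [O [HO HOb]].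
     exists O. split.
     * split; auto. exists n, k, c. split; auto. split; auto.
       intros y Ky Hy.
       assert (H1 : d x y < r).
       { pose proof (dtri x c y Kx Kc Ky). rewrite (dsym x c Kx Kc) in H. fold rho in Hy, Hcx. lra. }
       assert (H2 : d x c < r) by (rewrite dsym; auto; fold rho in Hcx; lra).
       pose proof (Hr y Ky H1). pose proof (Hr c Kc H2). simpl in *.
       replace (f y - f c) with ((f y - f x) - (f c - f x)) by ring.
       eapply Rle_lt_trans; [apply abs_sub_le|]. lra.
     * apply HOb; auto.
   + assert (LL : forall l', (forall O, In O l' -> Cov O) -> exists lst, Qp lst f /\
               forall y, K y -> (exists O, In O l' /\ O y) -> exists n k z c,
                 In (n,k,z) lst /\ nth_error (net n) k = Some c /\ d c y < / (INR n + 1)).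
     { induction l' as [|O l' IH]; intros Hl'.
       - exists nil. split. { intros n k z []. } intros y _ [O [[] _]].
       - destruct IH as [lst [HQ Hc]]. { intros; apply Hl'; simpl; auto. }
         assert (HSO := Hl' O (or_introl eq_refl)). unfold Cov in HSO.
         destruct HSO as [_ [n [k [c [Hk [HOb Hgood]]]]]].
         destruct (int_approx (f c) hh) as [z Hz]; [unfold hh; lra|].
         exists ((n,k,z) :: lst). split.
         + intros n' k' z' [E|Hin] c' Hc' y Ky Hy.
           * injection E as <- <- <-. rewrite Hk in Hc'. injection Hc' as <-.
             pose proof (Hgood y Ky Hy).
             replace (f y - IZR z * hh) with ((f y - f c) - (IZR z * hh - f c)) by ring.
             eapply Rle_lt_trans; [apply abs_sub_le|]. unfold hh in *. lra.
           * eapply HQ; eauto.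
         + intros y Ky [O' [[<-|HO'] Oy]].
           * exists n, k, z, c. split; [left; reflexivity|]. split; auto. apply HOb; auto.
           * destruct (Hc y Ky (ex_intro _ O' (conj HO' Oy))) as [n' [k' [z' [c' [H1 [H2 H3]]]]]].
             exists n', k', z', c'. split; [right; auto|auto]. }
     destruct (LL l Hl) as [lst [HQ Hcv]].
     assert (Ha : cont_real X (chs lst) /\ Qp lst (chs lst)).
     { unfold chs. apply epsilon_spec. exists f. split; auto. }
     destruct Ha as [Hac HaQ].
     exists (chs lst), (fun x => f x - chs lst x).
     assert (Hu : cont_real X (fun x => f x - chs lst x)) by (apply cont_sub; auto).
     split; [exists lst; split; auto|].
     split; [|split; [exact Hu|]].
     * apply HWU; auto. apply HKW; auto. intros x Kx. cbv beta.
       destruct (Hcv x Kx (Hcov x Kx)) as [n [k [z [c [Hin [Hk Hd]]]]]].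
       pose proof (HQ n k z Hin c Hk x Kx Hd). pose proof (HaQ n k z Hin c Hk x Kx Hd).
       replace (f x - chs lst x - 0) with ((f x - IZR z * hh) - (chs lst x - IZR z * hh)) by ring.
       eapply Rle_lt_trans; [apply abs_sub_le|]. lra.
     * apply functional_extensionality. intros x. ring.
Qed.

Theorem theorem2p5 (X : TopSpace) (HX : tychonoff X) :
  aleph0_bounded_Ck X <->
  (forall K : X -> Prop, compact_set X K -> metrizable_subspace X K).
Proof.
  split; [apply forward; exact HX | apply backward].
Qed.
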